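(* Let $g\in\mathscr{A}_3(\Pi)$ and let $(E_n)_{n\ge1}$ be an exhausting sequence of bounded subsets of $E$ such that $\lim_n\mathrm{tr}(\chi_{E_n}\Pi|g-1|^2\chi_{E_n^c}\Pi\chi_{E_n})=0$. Set $g_n=1+(g-1)\chi_{E_n}$. Then $L(g_n/g)\to0$ and $V(g_n/g)\to0$ as $n\to\infty$ (i.e. $g_n\to g$ in the topology $\mathscr{T}$).
   Context: $E$ is a locally compact complete separable metric space with $\sigma$-finite Borel measure $\mu$; $\Pi$ is a locally trace class orthogonal projection on $L^2(E,\mu)$ with kernel $\Pi(x,y)$ whose diagonal satisfies $\mathrm{tr}(\chi_B\Pi\chi_B)=\int_B\Pi(x,x)d\mu$. For Borel $f$, $L(f)=\int_E|f(x)-1|^3\Pi(x,x)d\mu(x)$ and $V(f)=\iint_{E^2}|f(x)-f(y)|^2|\Pi(x,y)|^2d\mu(x)d\mu(y)$. $\mathscr{A}_3(\Pi)$ is the set of positive Borel $g$ with $0<\inf g\le\sup g<\infty$, $L(g)<\infty$, $V(g)<\infty$, and for which some exhausting sequence of bounded sets $(E_n)$ satisfies $\lim_n\mathrm{tr}(\chi_{E_n}\Pi|g-1|^2\chi_{E_n^c}\Pi\chi_{E_n})=0$. The topology $\mathscr{T}$ on $\mathscr{A}_3(\Pi)$ is the one in which $g_n\to g$ iff $L(g_n/g)\to0$ and $V(g_n/g)\to0$. *)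

(* Defs.v *)
From mathcomp Require Import all_boot all_algebra.
From mathcomp Require Import all_classical all_reals all_analysis.
From mathcomp Require Export complex.
Set Implicit Arguments.
Unset Strict Implicit.
Unset Printing Implicit Defensive.
Import GRing.Theory Num.Theory.
Local Open Scope ring_scope.
Local Open Scope classical_set_scope.

Notation Borel T := (g_sigma_algebraType (@open T)).

Section Defs.
Context {R : realType} {T : completePseudoMetricType R}.

Definition cnorm2 (z : R[i]) : R := complex.Re z ^+ 2 + complex.Im z ^+ 2.

Definition bounded_in (B : set T) : Prop :=
  exists (x0 : T) (r : R), B `<=` ball x0 r.

Definition standing_space : Prop :=
  hausdorff_space T /\ locally_compact [set: T] /\
  (exists S : set T, countable S /\ dense S).

Definition exhausting (En : nat -> set T) : Prop :=
  (forall n, measurable (En n : set (Borel T))) /\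
  (forall n, bounded_in (En n)) /\
  (forall n, En n `<=` En n.+1) /\
  \bigcup_n En n = [set: T].

Variable mu : {measure set (Borel T) -> \bar R}.

(* K : E x E -> C is the integral kernel of a locally trace class orthogonal
   projection Pi on L^2(E, mu), with diagonal as in the context:
   - K is jointly Borel measurable;
   - K is Hermitian (Pi self-adjoint);
   - each row K(x, .) is in L^2(mu);
   - K is reproducing: int K(x,z) K(z,y) dmu(z) = K(x,y) (Pi^2 = Pi);
   - int_B K(x,x) dmu(x) < oo for every bounded Borel B (locally trace class). *)
Definition proj_kernel (K : T -> T -> R[i]) : Prop :=
  measurable_fun [set: Borel T * Borel T] (fun z => complex.Re (K z.1 z.2)) /\
  measurable_fun [set: Borel T * Borel T] (fun z => complex.Im (K z.1 z.2)) /\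
  (forall x y, K y x = conjc (K x y)) /\
  (forall x, (\int[mu]_y (cnorm2 (K x y))%:E < +oo)%E) /\
  (forall x y,
     complex.Re (K x y) =
       Rintegral mu [set: Borel T] (fun z => complex.Re (K x z * K z y)) /\
     complex.Im (K x y) =
       Rintegral mu [set: Borel T] (fun z => complex.Im (K x z * K z y))) /\
  (forall B : set T, measurable (B : set (Borel T)) -> bounded_in B ->
     (\int[mu]_(x in (B : set (Borel T))) (complex.Re (K x x))%:E < +oo)%E).

Variable K : T -> T -> R[i].

Definition Lpi (f : T -> R) : \bar R :=
  (\int[mu]_x (`|f x - 1| ^+ 3 * complex.Re (K x x))%:E)%E.

Definition Vpi (f : T -> R) : \bar R :=
  (\int[(mu \x mu)%E]_z
      (`|f z.1 - f z.2| ^+ 2 * cnorm2 (K z.1 z.2))%:E)%E.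

(* tr(chi_B Pi |g-1|^2 chi_{B^c} Pi chi_B), written through the kernel:
   this operator is A A^* with A = chi_B Pi |g-1| chi_{B^c}, whose trace is
   the squared Hilbert-Schmidt norm of A. *)
Definition trace_term (g : T -> R) (B : set T) : \bar R :=
  (\int[mu]_(x in (B : set (Borel T)))
     \int[mu]_(y in (~` B : set (Borel T)))
        (`|g y - 1| ^+ 2 * cnorm2 (K x y))%:E)%E.

Definition A3 (g : T -> R) : Prop :=
  measurable_fun [set: Borel T] g /\
  (exists c C : R, 0 < c /\ forall x, c <= g x <= C) /\
  (Lpi g < +oo)%E /\ (Vpi g < +oo)%E /\
  exists En : nat -> set T, exhausting En /\
    (fun n => trace_term g (En n)) @ \oo --> 0%E.

End Defs.

(* Main.v *)
Require Import Defs.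
From HB Require Import structures.
From mathcomp Require Import all_boot all_algebra.
From mathcomp Require Import all_classical all_reals all_analysis.
From mathcomp Require Import measurable_realfun.
From mathcomp Require Import ring lra.
Import order.Order.TTheory GRing.Theory Num.Theory.
Local Open Scope ring_scope.
Local Open Scope classical_set_scope.

Section Real.
Context (R : realType).

Lemma inv_sub1_le (c y : R) : 0 < c -> c <= y -> `|y^-1 - 1| <= c^-1 * `|y - 1|.
Proof.
move=> c0 cy; have y0 : 0 < y by apply: lt_le_trans cy.
have -> : y^-1 - 1 = (1 - y) * y^-1 by field; rewrite gt_eqF //.
have yi : 0 <= y^-1 by rewrite invr_ge0 ltW.
rewrite normrM distrC (ger0_norm yi) mulrC.
apply: ler_wpM2r; first exact: normr_ge0.
by rewrite lef_pV2 // posrE.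
Qed.

Lemma inv_sub_le (c y z : R) : 0 < c -> c <= y -> c <= z ->
  `|y^-1 - z^-1| <= c^-2 * `|y - z|.
Proof.
move=> c0 cy cz; have y0 : 0 < y by apply: lt_le_trans cy.
have z0 : 0 < z by apply: lt_le_trans cz.
have -> : y^-1 - z^-1 = (z - y) * (y * z)^-1 by field; rewrite ?gt_eqF //.
have yi : 0 <= (y * z)^-1 by rewrite invr_ge0 ltW // mulr_gt0.
rewrite normrM distrC (ger0_norm yi) mulrC.
apply: ler_wpM2r; first exact: normr_ge0.
rewrite expr2 lef_pV2 ?posrE ?mulr_gt0 //.
by apply: ler_pM => //; apply: ltW.
Qed.

Lemma sq_le (a b : R) : 0 <= a -> a <= b -> a ^+ 2 <= b ^+ 2.
Proof. move=> a0 ab; apply: lerXn2r => //; rewrite nnegrE //; exact: le_trans ab. Qed.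

Lemma cube_le (a b : R) : 0 <= a -> a <= b -> a ^+ 3 <= b ^+ 3.
Proof. move=> a0 ab; apply: lerXn2r => //; rewrite nnegrE //; exact: le_trans ab. Qed.

Lemma cnorm2_ge0 (z : R[i]) : 0 <= cnorm2 z.
Proof. by rewrite /cnorm2 addr_ge0 // sqr_ge0. Qed.

Lemma cnorm2_conj (z : R[i]) : cnorm2 (conjc z) = cnorm2 z.
Proof. by case: z => a b; rewrite /cnorm2 /= sqrrN. Qed.

Lemma Re_mul_conj (z : R[i]) : complex.Re (z * conjc z) = cnorm2 z.
Proof. by case: z => a b; rewrite /cnorm2 /=; ring. Qed.

End Real.

Section Main.
Context (R : realType) (T : completePseudoMetricType R)
  (mu : {measure set (Borel T) -> \bar R}) (Hs : sigma_finite [set: Borel T] mu).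
Definition smu : set (Borel T) -> \bar R := mu.
HB.instance Definition _ := Measure.on smu.
HB.instance Definition _ := @Measure_isSigmaFinite.Build _ _ _ smu Hs.

Context (K : T -> T -> R[i]) (g : T -> R) (B : nat -> set T).
Hypothesis hK : proj_kernel mu K.
Hypothesis hB : exhausting B.
Hypothesis mg : measurable_fun [set: Borel T] g.
Context (c : R) (c0 : 0 < c) (gc : forall x, c <= g x).

Lemma ksym x y : cnorm2 (K y x) = cnorm2 (K x y).
Proof. by case: hK => _ [_ [h _]]; rewrite h cnorm2_conj. Qed.

Lemma kdiag_ge0 x : 0 <= complex.Re (K x x).
Proof.
case: hK => _ [_ [h [_ [h2 _]]]].
rewrite (h2 x x).1 /Rintegral; apply: fine_ge0; apply: integral_ge0 => y _.
by rewrite (h x y) Re_mul_conj lee_fin cnorm2_ge0.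
Qed.

Lemma mRe : measurable_fun [set: Borel T * Borel T] (fun z => complex.Re (K z.1 z.2)).
Proof. by case: hK. Qed.
Lemma mIm : measurable_fun [set: Borel T * Borel T] (fun z => complex.Im (K z.1 z.2)).
Proof. by case: hK => _ []. Qed.

Lemma mk : measurable_fun [set: Borel T * Borel T] (fun z => cnorm2 (K z.1 z.2)).
Proof.
rewrite /cnorm2; apply: measurable_funD; apply: measurable_funX; [exact: mRe|exact: mIm].
Qed.

Lemma mh : measurable_fun [set: Borel T] (fun x => complex.Re (K x x)).
Proof.
have := measurableT_comp mRe (measurable_fun_pair (@measurable_id _ (Borel T) setT) (@measurable_id _ (Borel T) setT)).
by [].
Qed.

Lemma mB n : measurable (B n : set (Borel T)).
Proof. by case: hB. Qed.

Lemma mginv : measurable_fun [set: Borel T] (fun x => (g x)^-1).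
Proof.
have oD : open (`]0, +oo[%classic : set R) by exact: interval_open.
have mi : measurable_fun (`]0, +oo[%classic : set R) (@GRing.inv R).
  apply: open_continuous_measurable_fun => // x.
  rewrite inE /= in_itv /= andbT => x0; by apply: inv_continuous; rewrite gt_eqF.
have im : [set g x | x in [set: Borel T]] `<=` `]0, +oo[%classic.
  move=> _ [x _ <-] /=; rewrite in_itv /= andbT; exact: lt_le_trans (gc x).
exact: (measurable_comp (measurable_itv _) im mi mg).
Qed.

Lemma Bmono m n : (m <= n)%N -> B m `<=` B n.
Proof.
move=> /subnK <-; elim: (n - m)%N => [|k IH] //=.
case: hB => _ [_ [h _]]; exact: subset_trans IH (h _).
Qed.

Lemma Bev (x : T) : \forall n \near \oo, x \in B n.
Proof.
case: hB => _ [_ [_ hU]].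
have : (\bigcup_n B n) x by rewrite hU.
case=> N _ BNx; exists N => // n /= Nn; rewrite inE; exact: Bmono Nn _ BNx.
Qed.


Definition fn n x := (1 + (g x - 1) * \1_(B n) x) / g x.

Lemma gne0 x : g x != 0.
Proof. by rewrite gt_eqF // (lt_le_trans c0 (gc x)). Qed.

Lemma fn_in n x : x \in B n -> fn n x = 1.
Proof. by move=> xB; rewrite /fn indicE xB mulr1 addrC subrK divff // gne0. Qed.

Lemma fn_out n x : x \notin B n -> fn n x = (g x)^-1.
Proof. by move=> xB; rewrite /fn indicE (negbTE xB) mulr0 addr0 mul1r. Qed.

Lemma mfn n : measurable_fun [set: Borel T] (fn n).
Proof.
apply: measurable_funM; last exact: mginv.
apply: measurable_funD; first exact: measurable_cst.
apply: measurable_funM; last exact: measurable_indic (mB n).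
apply: measurable_funB => //; exact: measurable_cst.
Qed.

Local Open Scope ereal_scope.

Lemma L_cvg : Lpi mu K g < +oo -> (fun n => Lpi mu K (fn n)) @ \oo --> 0.
Proof.
move=> Lg.
pose G x := ((c^-1 ^+ 3) * (`|g x - 1| ^+ 3 * complex.Re (K x x)))%R.
have H0 x (a : R) : (0 <= `|a| ^+ 3 * complex.Re (K x x))%R.
  by apply: mulr_ge0; [exact: exprn_ge0|exact: kdiag_ge0].
have ci : (0 <= c^-1 ^+ 3)%R by apply: exprn_ge0; rewrite invr_ge0 ltW.
have G0 x : (0 <= G x)%R by apply: mulr_ge0.
have mG : measurable_fun [set: Borel T] G.
  apply: measurable_funM; first exact: measurable_cst.
  apply: measurable_funM; last exact: mh.
  apply: measurable_funX; apply: measurableT_comp; first exact: normr_measurable.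
  apply: measurable_funB => //; exact: measurable_cst.
have iG : mu.-integrable [set: Borel T] (EFin \o G).
  apply/integrableP; split; first exact/measurable_EFinP.
  rewrite (_ : \int[mu]_x _ = \int[mu]_x ((c^-1 ^+ 3)%:E * (`|g x - 1| ^+ 3 * complex.Re (K x x))%:E)); last first.
    by apply: eq_integral => x _; rewrite /= ger0_norm // /G EFinM.
  rewrite ge0_integralZl_EFin //; last 2 first.
  - by move=> x _; rewrite lee_fin.
  - apply/measurable_EFinP; apply: measurable_funM; last exact: mh.
    apply: measurable_funX; apply: measurableT_comp; first exact: normr_measurable.
    apply: measurable_funB => //; exact: measurable_cst.
  by apply: lte_mul_pinfty => //; rewrite lee_fin.
pose phi n x := (`|fn n x - 1| ^+ 3 * complex.Re (K x x))%R.
have mphi n : measurable_fun [set: Borel T] (EFin \o phi n).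
  apply/measurable_EFinP; apply: measurable_funM; last exact: mh.
  apply: measurable_funX; apply: measurableT_comp; first exact: normr_measurable.
  apply: measurable_funB; [exact: mfn|exact: measurable_cst].
have Hff : {ae mu, forall x, [set: Borel T] x -> (fun n => (phi n x)%:E) @ \oo --> 0%E}.
  apply: aeW => x _; apply: cvg_near_cst.
  near=> n; rewrite /phi fn_in ?subrr ?normr0 ?expr0n ?mul0r //.
  by near: n; apply: Bev.
have Hfg : {ae mu, forall x n, [set: Borel T] x -> `|(phi n x)%:E| <= (G x)%:E}.
  apply: aeW => x n _; rewrite /= lee_fin ger0_norm; last exact: H0.
  rewrite /phi /G mulrA -exprMn; apply: ler_wpM2r; first exact: kdiag_ge0.
  have [xB|xB] := boolP (x \in B n).
    rewrite fn_in // subrr normr0 expr0n /=; apply: exprn_ge0.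
    by apply: mulr_ge0; [rewrite invr_ge0 ltW | exact: normr_ge0].
  by rewrite fn_out //; apply: cube_le => //; exact: inv_sub1_le.
have [_ _] := @dominated_convergence _ _ R mu setT measurableT (fun n => EFin \o phi n)
  (cst 0) (EFin \o G) mphi (measurable_cst _) Hff iG Hfg.
by rewrite integral0.
Unshelve. all: end_near.
Qed.

Local Close Scope ereal_scope.

Lemma indic_in (A : set T) x : x \in A -> (\1_A x : R) = 1.
Proof. by move=> xA; rewrite indicE xA. Qed.
Lemma indic_out (A : set T) x : x \notin A -> (\1_A x : R) = 0.
Proof. by move=> xA; rewrite indicE (negbTE xA). Qed.

Arguments indic_in {A x}.
Arguments indic_out {A x}.

Lemma indic_ge0' (A : set T) x : 0 <= (\1_A x : R).
Proof. by rewrite indicE ler0n. Qed.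

Definition P (z : Borel T * Borel T) := `|g z.1 - g z.2| ^+ 2 * cnorm2 (K z.1 z.2).
Definition Pn n (z : Borel T * Borel T) := P z * \1_(~` B n) z.1 * \1_(~` B n) z.2.
Definition Qn n (z : Borel T * Borel T) :=
  `|g z.2 - 1| ^+ 2 * cnorm2 (K z.1 z.2) * \1_(B n) z.1 * \1_(~` B n) z.2.
Definition Qn' n (z : Borel T * Borel T) :=
  `|g z.1 - 1| ^+ 2 * cnorm2 (K z.1 z.2) * \1_(~` B n) z.1 * \1_(B n) z.2.
Definition Phi n (z : Borel T * Borel T) := `|fn n z.1 - fn n z.2| ^+ 2 * cnorm2 (K z.1 z.2).

Lemma m1 (f : T -> R) : measurable_fun [set: Borel T] f ->
  measurable_fun [set: Borel T * Borel T] (fun z => f z.1).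
Proof. move=> mf; exact: (measurableT_comp mf measurable_fst). Qed.
Lemma m2 (f : T -> R) : measurable_fun [set: Borel T] f ->
  measurable_fun [set: Borel T * Borel T] (fun z => f z.2).
Proof. move=> mf; exact: (measurableT_comp mf measurable_snd). Qed.

Lemma mnsq (f : Borel T * Borel T -> R) : measurable_fun setT f ->
  measurable_fun [set: Borel T * Borel T] (fun z => `|f z| ^+ 2).
Proof.
move=> mf; apply: measurable_funX; apply: measurableT_comp => //; exact: normr_measurable.
Qed.

Lemma mind1 (A : set T) : measurable (A : set (Borel T)) ->
  measurable_fun [set: Borel T * Borel T] (fun z => (\1_A z.1 : R)).
Proof. by move=> mA; apply: m1; exact: measurable_indic. Qed.
Lemma mind2 (A : set T) : measurable (A : set (Borel T)) ->
  measurable_fun [set: Borel T * Borel T] (fun z => (\1_A z.2 : R)).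
Proof. by move=> mA; apply: m2; exact: measurable_indic. Qed.

Lemma mBC n : measurable (~` B n : set (Borel T)).
Proof. exact: measurableC (mB n). Qed.

Lemma mP : measurable_fun setT P.
Proof.
apply: measurable_funM; last exact: mk.
apply: mnsq; apply: measurable_funB; [exact: m1|exact: m2].
Qed.

Lemma mPn n : measurable_fun setT (Pn n).
Proof.
apply: measurable_funM; last exact: mind2 (mBC n).
apply: measurable_funM; [exact: mP|exact: mind1 (mBC n)].
Qed.

Lemma mQn n : measurable_fun setT (Qn n).
Proof.
apply: measurable_funM; last exact: mind2 (mBC n).
apply: measurable_funM; last exact: mind1 (mB n).
apply: measurable_funM; last exact: mk.
apply: mnsq; apply: measurable_funB; [exact: m2|exact: measurable_cst].
Qed.

Lemma mQn' n : measurable_fun setT (Qn' n).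
Proof.
apply: measurable_funM; last exact: mind2 (mB n).
apply: measurable_funM; last exact: mind1 (mBC n).
apply: measurable_funM; last exact: mk.
apply: mnsq; apply: measurable_funB; [exact: m1|exact: measurable_cst].
Qed.

Lemma mPhi n : measurable_fun setT (Phi n).
Proof.
apply: measurable_funM; last exact: mk.
apply: mnsq.
have := measurable_funB (m1 _ (mfn n)) (m2 _ (mfn n)); exact.
Qed.

Lemma P_ge0 z : 0 <= P z.
Proof. by apply: mulr_ge0; [exact: exprn_ge0|exact: cnorm2_ge0]. Qed.
Lemma Pn_ge0 n z : 0 <= Pn n z.
Proof. by apply: mulr_ge0; [apply: mulr_ge0; [exact: P_ge0|exact: indic_ge0']|exact: indic_ge0']. Qed.
Lemma Qn_ge0 n z : 0 <= Qn n z.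
Proof. by apply: mulr_ge0; [apply: mulr_ge0; [apply: mulr_ge0; [exact: exprn_ge0|exact: cnorm2_ge0]|exact: indic_ge0']|exact: indic_ge0']. Qed.
Lemma Qn'_ge0 n z : 0 <= Qn' n z.
Proof. by apply: mulr_ge0; [apply: mulr_ge0; [apply: mulr_ge0; [exact: exprn_ge0|exact: cnorm2_ge0]|exact: indic_ge0']|exact: indic_ge0']. Qed.
Lemma Phi_ge0 n z : 0 <= Phi n z.
Proof. by apply: mulr_ge0; [exact: exprn_ge0|exact: cnorm2_ge0]. Qed.

Lemma Phi_le n z : Phi n z <= (c ^- 2) ^+ 2 * Pn n z + c^-1 ^+ 2 * Qn n z + c^-1 ^+ 2 * Qn' n z.
Proof.
case: z => x y; rewrite /Phi /Pn /Qn /Qn' /P /= !indicE !in_setC.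
have kk : 0 <= cnorm2 (K x y) by exact: cnorm2_ge0.
have [xB|xB] := boolP (x \in B n); have [yB|yB] := boolP (y \in B n) => /=.
- rewrite !fn_in // subrr normr0 expr0n /= mul0r !mulr0 !mul0r !addr0 mulr0 addr0 //.
- rewrite fn_in // fn_out // !mulr1 ?mulr0 ?mul0r ?add0r ?addr0 mulrA -exprMn.
  apply: ler_wpM2r => //; apply: sq_le; first exact: normr_ge0.
  by rewrite distrC; exact: inv_sub1_le.
- rewrite fn_out // fn_in // !mulr1 ?mulr0 ?mul0r ?add0r ?addr0 mulrA -exprMn.
  apply: ler_wpM2r => //; apply: sq_le; first exact: normr_ge0.
  exact: inv_sub1_le.
- rewrite !fn_out // !mulr1 ?mulr0 ?mul0r ?add0r ?addr0 mulrA -exprMn.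
  apply: ler_wpM2r => //; apply: sq_le; first exact: normr_ge0.
  exact: inv_sub_le.
Qed.

Local Open Scope ereal_scope.

Lemma trQ n : \int[(mu \x mu)%E]_z (Qn n z)%:E = trace_term mu K g (B n).
Proof.
rewrite (@fubini_tonelli1 _ _ _ _ R smu smu (fun z => (Qn n z)%:E)); last 2 first.
- apply: measurableT_comp; [exact: EFin_measurable|].
 exact: mQn.
- by move=> z; rewrite lee_fin Qn_ge0.
rewrite /fubini_F /trace_term [RHS]integral_mkcond; apply: eq_integral => x _.
rewrite patchE; case: ifPn => xB.
- rewrite [RHS]integral_mkcond; apply: eq_integral => y _; rewrite patchE.
  rewrite /Qn /= (indic_in xB) mulr1; case: ifPn => yB; first by rewrite (indic_in yB) mulr1.
  by rewrite (indic_out yB) mulr0.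
- by rewrite integral0_eq // => y _; rewrite /Qn /= (indic_out xB) mulr0 mul0r.
Qed.

Lemma trQ' n : \int[(mu \x mu)%E]_z (Qn' n z)%:E = trace_term mu K g (B n).
Proof.
rewrite (@fubini_tonelli2 _ _ _ _ R smu smu (fun z => (Qn' n z)%:E)); last 2 first.
- apply: measurableT_comp; [exact: EFin_measurable|exact: mQn'].
- by move=> z; rewrite lee_fin Qn'_ge0.
rewrite /fubini_G /trace_term [RHS]integral_mkcond; apply: eq_integral => x _.
rewrite patchE; case: ifPn => xB.
- rewrite [RHS]integral_mkcond; apply: eq_integral => y _; rewrite patchE.
  rewrite /Qn' /= (indic_in xB) mulr1 ksym; case: ifPn => yB; first by rewrite (indic_in yB) mulr1.
  by rewrite (indic_out yB) mulr0.
- by apply: integral0_eq => y _; rewrite /Qn' /= (indic_out xB) mulr0.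
Qed.

Lemma indic_le1 (A : set T) x : ((\1_A x : R) <= 1)%R.
Proof. by rewrite indicE; case: (x \in A). Qed.

Lemma Pn_cvg : Vpi mu K g < +oo ->
  (fun n => \int[(mu \x mu)%E]_z (Pn n z)%:E) @ \oo --> 0.
Proof.
move=> Vg.
have mEP : measurable_fun [set: Borel T * Borel T] (EFin \o P).
  apply: measurableT_comp; [exact: EFin_measurable|exact: mP].
have iG : (smu \x smu)%E.-integrable [set: Borel T * Borel T] (EFin \o P).
  apply/integrableP; split => //.
  rewrite (_ : \int[_]_x _ = \int[(smu \x smu)%E]_z (P z)%:E) //.
  by apply: eq_integral => z _; rewrite /= ger0_norm // P_ge0.
have mphi n : measurable_fun [set: Borel T * Borel T] (EFin \o Pn n).
  apply: measurableT_comp; [exact: EFin_measurable|exact: mPn].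
have Hff : {ae (smu \x smu)%E, forall z, [set: Borel T * Borel T] z ->
    (fun n => (Pn n z)%:E) @ \oo --> 0%E}.
  apply: aeW => z _; apply: cvg_near_cst.
  near=> n; rewrite /Pn (@indic_out _ z.1) ?mulr0 ?mul0r //.
  rewrite in_setC negbK.
  by near: n; apply: Bev.
have Hfg : {ae (smu \x smu)%E, forall z n, [set: Borel T * Borel T] z ->
    `|(Pn n z)%:E| <= (P z)%:E}.
  apply: aeW => z n _; rewrite /= lee_fin ger0_norm; last exact: Pn_ge0.
  rewrite /Pn -[X in (_ <= X)%R]mulr1 -mulrA; apply: ler_wpM2l; first exact: P_ge0.
  by apply: mulr_ile1; rewrite ?indic_ge0' ?indic_le1.
have [_ _] := @dominated_convergence _ _ R (smu \x smu)%E setT measurableT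
  (fun n => EFin \o Pn n) (cst 0) (EFin \o P) mphi (measurable_cst _) Hff iG Hfg.
by rewrite integral0.
Unshelve. all: end_near.
Qed.

Lemma V_cvg : Vpi mu K g < +oo ->
  (fun n => trace_term mu K g (B n)) @ \oo --> 0 ->
  (fun n => Vpi mu K (fn n)) @ \oo --> 0.
Proof.
move=> Vg Htr.
set a := ((c ^- 2) ^+ 2)%R; set b := (c^-1 ^+ 2)%R.
have a0 : (0 <= a)%R by rewrite /a exprn_ge0 // invr_ge0 exprn_ge0 // ltW.
have b0 : (0 <= b)%R by rewrite /b exprn_ge0 // invr_ge0 ltW.
pose I n := \int[(smu \x smu)%E]_z (Pn n z)%:E.
pose h n := a%:E * I n + b%:E * trace_term mu K g (B n) + b%:E * trace_term mu K g (B n).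
have EF (f : Borel T * Borel T -> R) : measurable_fun setT f ->
    measurable_fun [set: Borel T * Borel T] (EFin \o f).
  move=> mf; apply: measurableT_comp; [exact: EFin_measurable|exact: mf].
have le n : Vpi mu K (fn n) <= h n.
  rewrite /h -{2}(trQ' n) -(trQ n) /I.
  have -> : Vpi mu K (fn n) = \int[(smu \x smu)%E]_z (Phi n z)%:E by [].
  apply: (@le_trans _ _ (\int[(smu \x smu)%E]_z
      ((a * Pn n z)%:E + (b * Qn n z)%:E + (b * Qn' n z)%:E))).
    apply: ge0_le_integral => //.
    - by move=> z _; rewrite lee_fin Phi_ge0.
    - exact: (EF _ (mPhi n)).
    - apply: emeasurable_funD; [apply: emeasurable_funD|].
      + exact: (EF (fun z => a * Pn n z)%R (measurable_funM (measurable_cst _) (mPn n))).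
      + exact: (EF (fun z => b * Qn n z)%R (measurable_funM (measurable_cst _) (mQn n))).
      + exact: (EF (fun z => b * Qn' n z)%R (measurable_funM (measurable_cst _) (mQn' n))).
    - by move=> z _; rewrite -!EFinD lee_fin Phi_le.
  rewrite ge0_integralD //; last 4 first.
  - by move=> z _; rewrite adde_ge0 // lee_fin mulr_ge0 ?Pn_ge0 ?Qn_ge0.
  - apply: emeasurable_funD.
      exact: (EF (fun z => a * Pn n z)%R (measurable_funM (measurable_cst _) (mPn n))).
    exact: (EF (fun z => b * Qn n z)%R (measurable_funM (measurable_cst _) (mQn n))).
  - by move=> z _; rewrite lee_fin mulr_ge0 ?Qn'_ge0.
  - exact: (EF (fun z => b * Qn' n z)%R (measurable_funM (measurable_cst _) (mQn' n))).
  rewrite ge0_integralD //; last 4 first.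
  - by move=> z _; rewrite lee_fin mulr_ge0 ?Pn_ge0.
  - exact: (EF (fun z => a * Pn n z)%R (measurable_funM (measurable_cst _) (mPn n))).
  - by move=> z _; rewrite lee_fin mulr_ge0 ?Qn_ge0.
  - exact: (EF (fun z => b * Qn n z)%R (measurable_funM (measurable_cst _) (mQn n))).
  have Z (k : R) (f : Borel T * Borel T -> R) : (0 <= k)%R -> (forall z, 0 <= f z)%R ->
      measurable_fun setT f ->
      \int[(smu \x smu)%E]_z (k * f z)%:E = k%:E * \int[(smu \x smu)%E]_z (f z)%:E.
    move=> k0 f0 mf; under eq_integral do rewrite EFinM.
    rewrite ge0_integralZl_EFin //; first by move=> z _; rewrite lee_fin.
    exact: EF.
  rewrite (Z a (Pn n) a0 (Pn_ge0 n) (mPn n)).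
  rewrite (Z b (Qn n) b0 (Qn_ge0 n) (mQn n)).
  rewrite (Z b (Qn' n) b0 (Qn'_ge0 n) (mQn' n)).
  exact: lexx.
have hcvg : h n @[n --> \oo] --> 0.
  have HI : I n @[n --> \oo] --> 0 by exact: Pn_cvg.
  have := cvgeD _ (cvgeD _ (cvgeZl (y := a%:E) _ HI) (cvgeZl (y := b%:E) _ Htr))
    (cvgeZl (y := b%:E) _ Htr).
  by rewrite !mule0 !adde0; apply.
apply: (@squeeze_cvge _ _ _ _ (cst 0) _ h).
- apply: nearW => n; rewrite le andbT.
  have -> : Vpi mu K (fn n) = \int[(smu \x smu)%E]_z (Phi n z)%:E by [].
  by apply: integral_ge0 => z _; rewrite lee_fin Phi_ge0.
- exact: cvg_cst.
- exact: hcvg.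
Qed.

End Main.

Theorem lemma7p6 (R : realType) (T : completePseudoMetricType R)
  (mu : {measure set (Borel T) -> \bar R})
  (K : T -> T -> R[i]) (g : T -> R) (En : nat -> set T) :
  standing_space (T := T) ->
  sigma_finite [set: Borel T] mu ->
  proj_kernel mu K ->
  A3 mu K g ->
  exhausting En ->
  (fun n => trace_term mu K g (En n)) @ \oo --> 0%E ->
  let gn : nat -> T -> R := fun n x => 1 + (g x - 1) * \1_(En n) x in
  ((fun n : nat => Lpi mu K (fun x => gn n x / g x)) @ \oo --> 0%E) /\
  ((fun n : nat => Vpi mu K (fun x => gn n x / g x)) @ \oo --> 0%E).
Proof.
move=> _ Hs hK hA hB htr gn.
case: hA => mg [[c [C [c0 hc]]] [Lg [Vg _]]].
have gc x : c <= g x by case/andP: (hc x).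
split.
- exact: (@L_cvg _ _ mu K g En hK hB mg c c0 gc Lg).
- exact: (@V_cvg _ _ mu Hs K g En hK hB mg c c0 gc Vg htr).
Qed.
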